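(* Let $H$ be a finite, connected, $d$-regular graph on $[n]$, let $i_0$ be a vertex of $H$, and let $j_1,\dots,j_\ell$ ($1\le\ell\le d$) be distinct neighbours of $i_0$. Then: (i) $\Phi_{\ell-1}(x_{i_0};x_{j_1},\dots,x_{j_\ell})\in\mathbb{I}(U(H))$; (ii) $\Phi_{\ell-1}(x_0;x_1,\dots,x_\ell)$ is symmetric in $x_1,\dots,x_\ell$, and its total degree in the variables $x_0,\dots,x_\ell$ is $2d-\ell+1$; (iii) if $\overline{c}\in\mathbb{C}^m$ and $u_0\in\mathbb{C}$ are such that $\Phi_{\overline{c}}(u_0,y)$ has $d$ distinct roots $u_1,\dots,u_d$, then the set of solutions $(x_1,\dots,x_d)\in\mathbb{C}^d$ of the system $\Phi_0(u_0;x_1)=\Phi_1(u_0;x_1,x_2)=\dots=\Phi_{d-1}(u_0;x_1,\dots,x_d)=0$ (coefficients specialized at $\overline{c}$) is exactly the set of all permutations of $(u_1,\dots,u_d)$.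
   Context: Let $\overline{a}=(a_{ij})_{0\le j\le i\le d}$ be $m=(d+1)(d+2)/2$ indeterminates, with $a_{ji}=a_{ij}$, and $\Phi(x,y)=\Phi_{\overline{a}}(x,y)=\sum_{i,j=0}^d a_{ij}x^iy^j$; $\Phi_{\overline{c}}$ denotes its specialization at $\overline{c}\in\mathbb{C}^m$. Define $\Phi_0(x_0;x_1)=\Phi(x_0,x_1)$ and recursively, for $\ell\ge 2$, $\Phi_{\ell-1}(x_0;x_1,\dots,x_\ell)=\dfrac{\Phi_{\ell-2}(x_0;x_1,\dots,x_{\ell-1})-\Phi_{\ell-2}(x_0;x_1,\dots,x_{\ell-2},x_\ell)}{x_\ell-x_{\ell-1}}$ (a polynomial). With $E$ the edge set of $H$: $S(H)=\{\Phi_{\overline{a}}(x_i,x_j):ij\in E\}\subseteq\mathbb{C}[\overline{a},x_1,\dots,x_n]$, $W(H)=\mathbb{V}(S(H))\subseteq\mathbb{C}^{m+n}$, $Z(H)=W(H)\cap\bigcup_{i>j}\mathbb{V}(x_i-x_j)$, $U(H)=\overline{W(H)\setminus Z(H)}$ (Zariski closure), and $\mathbb{I}(U(H))$ is the ideal of polynomials vanishing on $U(H)$. *)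

(* Defs.v *)
From HB Require Import structures.
From Stdlib Require Import ClassicalEpsilon.
From mathcomp Require Import all_boot all_order all_algebra all_fingroup.
From mathcomp Require Import Rstruct.
From mathcomp Require Import complex.
From mathcomp Require Import mpoly.



Unset Printing Implicit Defensive.

Import Order.TTheory GRing.Theory Num.Theory.
Local Open Scope ring_scope.

Definition CC : closedFieldType := (Rdefinitions.R)[i].

(* m = (d+1)(d+2)/2 : number of indeterminates a_ij, 0 <= j <= i <= d. *)
Definition nA (d : nat) : nat := ((d.+1 * d.+2) %/ 2)%N.

Lemma nA_gt0 (d : nat) : (0 < nA d)%N.
Proof.
by rewrite /nA divn_gt0 // (leq_trans (_ : 2 <= 1 * 2)%N) // leq_mul.
Qed.

(* Index of the indeterminate a_ij = a_ji in 'I_m: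
   for j <= i <= d, a_ij has index i(i+1)/2 + j. *)
Definition aidx (d i j : nat) : 'I_(nA d) :=
  insubd (Ordinal (nA_gt0 d))
    ((((maxn i j) * (maxn i j).+1) %/ 2) + minn i j)%N.

Definition PhiBiv (R : comNzRingType) (d : nat) (a : nat -> nat -> R)
  (x y : R) : R :=
  \sum_(i < d.+1) \sum_(j < d.+1) a i j * x ^+ i * y ^+ j.

Definition Avar (d n i j : nat) : {mpoly CC[nA d + n]} :=
  'X_(lshift n (aidx d i j)).
Definition Xvar (d n : nat) (k : 'I_n) : {mpoly CC[nA d + n]} :=
  'X_(rshift (nA d) k).

Definition Vset (N : nat) (T : {mpoly CC[N]} -> Prop) : ('I_N -> CC) -> Prop :=
  fun v => forall p, T p -> p.@[v] = 0.

Definition zclosure (N : nat) (S : ('I_N -> CC) -> Prop) : ('I_N -> CC) -> Prop :=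
  fun v => forall T : {mpoly CC[N]} -> Prop,
    (forall w, S w -> Vset N T w) -> Vset N T v.

Definition IdealOf (N : nat) (S : ('I_N -> CC) -> Prop) : {mpoly CC[N]} -> Prop :=
  fun p => forall v, S v -> p.@[v] = 0.

Definition SH (d n : nat) (e : rel 'I_n) : {mpoly CC[nA d + n]} -> Prop :=
  fun p => exists i j : 'I_n, e i j /\ p = PhiBiv _ d (Avar d n) (Xvar d n i) (Xvar d n j).

Definition WH (d n : nat) (e : rel 'I_n) := Vset (nA d + n) (SH d n e).

Definition ZH (d n : nat) (e : rel 'I_n) : ('I_(nA d + n) -> CC) -> Prop :=
  fun v => WH d n e v /\
    exists i j : 'I_n, (j < i)%N /\ (Xvar d n i - Xvar d n j).@[v] = 0.

Definition UH (d n : nat) (e : rel 'I_n) :=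
  zclosure (nA d + n) (fun v => WH d n e v /\ ~ ZH d n e v).

Definition PU (d : nat) := {mpoly CC[nA d + d.+1]}.

Definition UA (d i j : nat) : PU d := 'X_(lshift d.+1 (aidx d i j)).
Definition UX (d t : nat) : PU d := 'X_(rshift (nA d) (inord t : 'I_d.+1)).

Definition subst_var (d s t : nat) : (nA d + d.+1).-tuple (PU d) :=
  [tuple (if i == rshift (nA d) (inord s : 'I_d.+1) then UX d t else 'X_i)
  | i < nA d + d.+1].

(* exact quotient p / q (the r with p = q * r; unique when q != 0) *)
Definition mquot (N : nat) (p q : {mpoly CC[N]}) : {mpoly CC[N]} :=
  epsilon (inhabits 0) (fun r => p = q * r).

(* PhiU d k = Phi_k(x_0; x_1, ..., x_{k+1}):
   Phi_0(x_0; x_1) = Phi(x_0, x_1),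
   Phi_{l-1}(x_0;..,x_l) = (Phi_{l-2}(x_0;..,x_{l-1}) - Phi_{l-2}(x_0;..,x_{l-2},x_l))
                           / (x_l - x_{l-1}). *)
Fixpoint PhiU (d k : nat) : PU d :=
  match k with
  | 0 => PhiBiv _ d (UA d) (UX d 0) (UX d 1)
  | k'.+1 => let P := PhiU d k' in
      mquot (nA d + d.+1) (P - (P \mPo subst_var d k'.+1 k'.+2)) (UX d k'.+2 - UX d k'.+1)
  end.

(* Phi_{l-1}(x_{i0}; x_{j_1}, ..., x_{j_l}) in C[a, x_1..x_n]:
   substitution a -> a, x_0 -> x_{i0}, x_t -> x_{j_t} (1 <= t <= l). *)
Definition spec_tuple (d n l : nat) (i0 : 'I_n) (j : 'I_l -> 'I_n)
  : (nA d + d.+1).-tuple {mpoly CC[nA d + n]} :=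
  [tuple (match split v with
          | inl a => 'X_(lshift n a)
          | inr t => if (t : nat) == 0%N then Xvar d n i0
                     else if insub (t.-1) is Some k then Xvar d n (j k) else 0
          end) | v < nA d + d.+1].

Definition perm_tuple (d l : nat) (s : 'S_l) : (nA d + d.+1).-tuple (PU d) :=
  [tuple (match split v with
          | inl a => 'X_v
          | inr t => if (t : nat) == 0%N then 'X_v
                     else if insub (t.-1) is Some k then UX d (s k).+1 else 'X_v
          end) | v < nA d + d.+1].

(* total degree in the variables x_0, ..., x_d (the a_ij have weight 0) *)
Definition xdeg (d : nat) (p : PU d) : nat :=
  (\max_(mo <- msupp p) \sum_(t < d.+1) mo (rshift (nA d) t))%N.

Definition spec_pt (d : nat) (c : 'I_(nA d) -> CC) (u0 : CC) (x : 'I_d -> CC)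
  : 'I_(nA d + d.+1) -> CC :=
  fun v => match split v with
           | inl a => c a
           | inr t => if (t : nat) == 0%N then u0
                      else if insub (t.-1) is Some k then x k else 0
           end.

Definition PhiSpec (d : nat) (c : 'I_(nA d) -> CC) (u0 : CC) : {poly CC} :=
  PhiBiv _ d (fun i j => (c (aidx d i j))%:P) u0%:P 'X.

(* Main.v *)
Require Import Defs.
From HB Require Import structures.
From mathcomp Require Import all_boot all_order all_algebra all_fingroup.
From mathcomp Require Import Rstruct complex mpoly.
From Stdlib Require Import ClassicalEpsilon.
From mathcomp Require Import ring zify.
Import Order.TTheory GRing.Theory Num.Theory.
Local Open Scope ring_scope.
Set Implicit Arguments. Unset Strict Implicit. Unset Printing Implicit Defensive.

Section Gen.
Variable R : comNzRingType.

Fixpoint Qf (z : R) (p : nat -> R) (m : nat) : R :=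
  match m with 0 => p 0%N | m'.+1 => p m + z * Qf z p m' end.
Fixpoint Hs (s : seq R) : nat -> R :=
  match s with [::] => fun m => (m == 0%N)%:R | z :: s' => Qf z (Hs s') end.
Fixpoint Lz (z : nat -> R) (k : nat) : seq R :=
  match k with 0 => [:: z 1%N] | k'.+1 => z k.+1 :: Lz z k' end.
Definition Gd (s : seq R) (k j : nat) : R := if (k <= j)%N then Hs s (j - k) else 0.
Definition DD (d : nat) (a : nat -> nat -> R) (x0 : R) (z : nat -> R) (k : nat) : R :=
  \sum_(i < d.+1) \sum_(j < d.+1) a i j * x0 ^+ i * Gd (Lz z k) k j.

Lemma Qf_diff z w p m : Qf z p m.+1 - Qf w p m.+1 = (z - w) * Qf w (Qf z p) m.
Proof.
elim: m => [|m IH] /=; first by ring.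
have -> : p m.+2 + z * (p m.+1 + z * Qf z p m) - (p m.+2 + w * (p m.+1 + w * Qf w p m))
  = (z - w) * (p m.+1 + z * Qf z p m) + w * (p m.+1 + z * Qf z p m - (p m.+1 + w * Qf w p m)) by ring.
by rewrite IH; ring.
Qed.

Lemma Qf_ext z p p' : p =1 p' -> Qf z p =1 Qf z p'.
Proof. by move=> e; elim=> [|m IH] //=; rewrite IH e. Qed.

Lemma Hs0 s : Hs s 0 = 1.
Proof. by elim: s => //= z s IH. Qed.

Lemma Hs1 y m : Hs [:: y] m = y ^+ m.
Proof.
rewrite /=; elim: m => [|m IH] /=; first by rewrite expr0.
by rewrite IH add0r exprS.
Qed.

Lemma Gd_diff z w r k j :
  Gd (z :: r) k j - Gd (w :: r) k j = (z - w) * Gd (w :: z :: r) k.+1 j.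
Proof.
rewrite /Gd; case: (ltngtP k j) => hkj.
- rewrite -subnSK //=. exact: Qf_diff.
- by rewrite subr0 mulr0.
- by rewrite -hkj subnn /= subrr mulr0.
Qed.

Definition Lt (z : nat -> R) k := match k with 0 => [::] | k'.+1 => Lz z k' end.

Lemma LzE z k : Lz z k = z k.+1 :: Lt z k.
Proof. by case: k. Qed.

Lemma Lz_eq z z' k : (forall t, (0 < t <= k.+1)%N -> z t = z' t) -> Lz z k = Lz z' k.
Proof.
elim: k => [|k IH] H /=; first by rewrite H.
congr (_ :: _); first by apply: H; rewrite /= leqnn.
by apply: IH => t /andP[t0 tk]; apply: H; rewrite t0 ltnW.
Qed.

Lemma Lt_eq z z' k : (forall t, (0 < t <= k)%N -> z t = z' t) -> Lt z k = Lt z' k.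
Proof. by case: k => //= k H; apply: Lz_eq. Qed.

Lemma DD_eq d a x0 z z' k : (forall t, (0 < t <= k.+1)%N -> z t = z' t) ->
  DD d a x0 z k = DD d a x0 z' k.
Proof. by move=> H; rewrite /DD (Lz_eq H). Qed.

Definition zsub (z : nat -> R) k := fun t => if t == k.+1 then z k.+2 else z t.

Lemma DD_diff d a x0 z k :
  DD d a x0 z k - DD d a x0 (zsub z k) k = (z k.+1 - z k.+2) * DD d a x0 z k.+1.
Proof.
rewrite /DD -sumrB mulr_sumr; apply: eq_bigr => i _.
rewrite -sumrB mulr_sumr; apply: eq_bigr => j _.
have -> : Lz (zsub z k) k = z k.+2 :: Lt z k.
  rewrite LzE /zsub eqxx; congr (_ :: _); apply: Lt_eq => t /andP[_ tk].
  by rewrite ltn_eqF.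
rewrite LzE -mulrBr Gd_diff /=; rewrite LzE; ring.
Qed.

End Gen.

Section Morph.
Variables (R S : comNzRingType) (f : {rmorphism R -> S}).

Lemma Qf_morph z p m : f (Qf z p m) = Qf (f z) (f \o p) m.
Proof. by elim: m => [|m IH] //=; rewrite rmorphD rmorphM IH. Qed.

Lemma Hs_morph s m : f (Hs s m) = Hs (map f s) m.
Proof.
elim: s m => [|z s IH] m /=; first by rewrite rmorph_nat.
by rewrite Qf_morph; apply: Qf_ext => t /=; rewrite IH.
Qed.

Lemma Lz_morph z k : map f (Lz z k) = Lz (f \o z) k.
Proof. by elim: k => [|k IH] //=; rewrite IH. Qed.

Lemma DD_morph d a x0 z k :
  f (DD d a x0 z k) = DD d (fun i j => f (a i j)) (f x0) (f \o z) k.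
Proof.
rewrite /DD rmorph_sum; apply: eq_bigr => i _.
rewrite rmorph_sum; apply: eq_bigr => j _.
rewrite !rmorphM rmorphXn /Gd; case: ifP => _; last by rewrite rmorph0.
by rewrite Hs_morph Lz_morph.
Qed.
End Morph.

Section Gen2.
Variable R : comNzRingType.
Variable d : nat.
Implicit Types (a : nat -> nat -> R) (z : nat -> R).

Definition PB a x y : R := \sum_(i < d.+1) \sum_(j < d.+1) a i j * x ^+ i * y ^+ j.

Lemma DD0 a x0 z : DD d a x0 z 0 = PB a x0 (z 1%N).
Proof.
rewrite /DD /PB; apply: eq_bigr => i _; apply: eq_bigr => j _.
by rewrite /Gd leq0n subn0 /= -[Qf _ _ j]/(Hs [:: z 1%N] j) Hs1.
Qed.

Lemma DDd a x0 z : DD d a x0 z d = \sum_(i < d.+1) a i d * x0 ^+ i.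
Proof.
rewrite /DD; apply: eq_bigr => i _.
rewrite big_ord_recr /= /Gd leqnn subnn Hs0 mulr1 big1 ?add0r // => j _.
by rewrite leqNgt ltn_ord /= mulr0.
Qed.

Definition zy z (y : R) k := fun t => if t == k.+1 then y else z t.

Lemma Newton a x0 z y k : (forall t, (t < k)%N -> DD d a x0 z t = 0) ->
  PB a x0 y = DD d a x0 (zy z y k) k * \prod_(t < k) (y - z t.+1).
Proof.
have -> : PB a x0 y = DD d a x0 (zy z y 0) 0 by rewrite DD0 /zy eqxx.
elim: k => [|k IH] H; first by rewrite big_ord0 mulr1.
rewrite IH; last by move=> t tk; apply: H; rewrite ltnS ltnW.
suff -> : DD d a x0 (zy z y k) k = (y - z k.+1) * DD d a x0 (zy z y k.+1) k.+1.
  by rewrite big_ord_recr /=; ring.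
have := DD_diff d a x0 (zy z y k.+1) k.
rewrite (@DD_eq _ d a x0 (zy z y k.+1) z); last first.
  by move=> t /andP[_ tk]; rewrite /zy ltn_eqF // ltnS.
rewrite H // (@DD_eq _ d a x0 (zsub (zy z y k.+1) k) (zy z y k)); last first.
  move=> t /andP[_ tk]; rewrite /zsub /zy.
  case: eqP => [_|ne]; first by rewrite eqxx.
  by rewrite (@ltn_eqF t k.+2 tk).
rewrite add0r => E; rewrite -[LHS]opprK E /zy eqxx ltn_eqF //; ring.
Qed.
End Gen2.

Section Idom.
Variable R : idomainType.
Variable d : nat.
Implicit Types (a : nat -> nat -> R) (z : nat -> R).

Lemma DD_roots a x0 k z :
  (forall t, (0 < t <= k.+1)%N -> PB d a x0 (z t) = 0) ->
  (forall t t', (0 < t <= k.+1)%N -> (0 < t' <= k.+1)%N -> z t = z t' -> t = t') ->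
  DD d a x0 z k = 0.
Proof.
elim: k z => [|k IH] z Hr Hi; first by rewrite DD0 Hr.
have := DD_diff d a x0 z k.
rewrite IH; first last.
- by move=> t t' /andP[t0 tk] /andP[t'0 t'k]; apply: Hi; rewrite ?t0 ?t'0 ltnW.
- by move=> t /andP[t0 tk]; apply: Hr; rewrite t0 ltnW.
rewrite IH; first last.
- move=> t t' /andP[t0 tk] /andP[t'0 t'k]; rewrite /zsub.
  case: (t =P k.+1) => [->|nt]; case: (t' =P k.+1) => [->|nt'] // e.
  + have := Hi _ _ _ _ e; lia.
  + have := Hi _ _ _ _ e; lia.
  + have := Hi _ _ _ _ e; lia.
- move=> t /andP[t0 tk]; rewrite /zsub; case: eqP => _; apply: Hr; lia.
rewrite subrr => /esym/eqP; rewrite mulf_eq0 subr_eq0 => /orP[/eqP e|/eqP //].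
by have := Hi _ _ _ _ e; lia.
Qed.

Lemma Qf_comm (z w : R) (p : nat -> R) m : Qf w (Qf z p) m = Qf z (Qf w p) m.
Proof.
have [-> //|nzw] := eqVneq z w.
apply: (mulfI (x := z - w)); first by rewrite subr_eq0.
rewrite -Qf_diff.
have -> : (z - w) * Qf z (Qf w p) m = - ((w - z) * Qf z (Qf w p) m) by ring.
by rewrite -Qf_diff opprB.
Qed.

Lemma Hs_swap (z w : R) s : Hs (w :: z :: s) =1 Hs (z :: w :: s).
Proof. by move=> m /=; rewrite Qf_comm. Qed.

Lemma Hs_mid t1 (z : R) t2 : Hs (t1 ++ z :: t2) =1 Hs (z :: t1 ++ t2).
Proof.
elim: t1 => [|w t1 IH] m //=.
rewrite (Qf_ext w IH) -[Qf w (Qf z _) m]/(Hs [:: w, z & t1 ++ t2] m).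
by rewrite Hs_swap.
Qed.

Lemma Hs_perm (s t : seq R) : perm_eq s t -> Hs s =1 Hs t.
Proof.
elim: s t => [|z s IH] t pst m.
  by move: (perm_size pst); case: t pst.
have zt : z \in t by rewrite -(perm_mem pst) mem_head.
have tE : t = take (index z t) t ++ z :: drop (index z t).+1 t.
  by rewrite -{1}(cat_take_drop (index z t) t) (drop_nth z) ?index_mem // nth_index.
rewrite tE Hs_mid /=; apply: Qf_ext => n; apply: IH.
rewrite -(perm_cons z); apply: (perm_trans pst).
rewrite {1}tE -cat1s -[z :: _]cat1s.
by rewrite perm_catCA.
Qed.
End Idom.

Lemma LzM (R : comNzRingType) (z : nat -> R) k :
  Lz z k = map (fun t => z t.+1) (rev (iota 0 k.+1)).
Proof.
elim: k => [|k IH] //.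
have -> : iota 0 k.+2 = rcons (iota 0 k.+1) k.+1 by rewrite -cats1 -addn1 iotaD.
by rewrite rev_rcons /= -IH.
Qed.


Lemma mquotE N (p q r : {mpoly CC[N]}) : q != 0 -> p = q * r -> mquot N p q = r.
Proof.
move=> qnz E; rewrite /mquot.
have := epsilon_spec (inhabits 0) (fun r => p = q * r) (ex_intro _ r E).
move=> E'; apply: (mulfI qnz); by rewrite -E' -E.
Qed.

Lemma inordV n (t : nat) : nat_of_ord (inord t : 'I_n.+1) = if (t <= n)%N then t else 0%N.
Proof.
case: ifP => h; first by rewrite inordK.
by rewrite /inord /insubd insubN // ltnS h.
Qed.

Lemma lrshift_neq m n (a : 'I_m) (b : 'I_n) : (lshift n a == rshift m b) = false.
Proof. apply/negbTE/eqP => /(congr1 val) /=; have := ltn_ord a; lia. Qed.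

Lemma rshift_eq m n (a b : 'I_n) : (rshift m a == rshift m b) = (a == b).
Proof. by apply/eqP/eqP => [/rshift_inj|->]. Qed.

Section Concrete.
Variable d : nat.
Local Notation N := (nA d + d.+1)%N.

Lemma UX_eq s t : (s <= d)%N -> (t <= d)%N -> (rshift (nA d) (inord s : 'I_d.+1) == rshift (nA d) (inord t)) = (s == t).
Proof.
move=> hs ht; rewrite rshift_eq; apply/eqP/eqP => [/(congr1 val)|->//].
by rewrite /= !inordK.
Qed.

Lemma UX_neq0 s t : (s <= d)%N -> (t <= d)%N -> s != t -> UX d s - UX d t != 0.
Proof.
move=> hs ht st; apply/eqP => /(congr1 (meval (fun i => (i == rshift (nA d) (inord s : 'I_d.+1))%:R))).
rewrite mevalB !mevalXU eqxx UX_eq // eq_sym (negbTE st) subr0 meval0 => /eqP.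
by rewrite oner_eq0.
Qed.

Lemma subst_UA k i j : UA d i j \mPo subst_var d k.+1 k.+2 = UA d i j.
Proof. by rewrite comp_mpolyXU -tnth_nth tnth_mktuple lrshift_neq. Qed.

Lemma subst_UX k t : (k.+2 <= d)%N ->
  UX d t \mPo subst_var d k.+1 k.+2 = zsub (UX d) k t.
Proof.
move=> hk; rewrite /UX comp_mpolyXU -tnth_nth tnth_mktuple rshift_eq /zsub.
case: (t =P k.+1) => [->|nt]; first by rewrite eqxx.
case: eqP => // /(congr1 val); rewrite /= !inordV.
case: ifP; case: ifP; lia.
Qed.

Lemma DD_exta (R : comNzRingType) d' (a a' : nat -> nat -> R) x0 z k :
  (forall i j, a i j = a' i j) -> DD d' a x0 z k = DD d' a' x0 z k.
Proof.
by move=> H; rewrite /DD; apply: eq_bigr => i _; apply: eq_bigr => j _; rewrite H.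
Qed.

Lemma compM (lq : N.-tuple {mpoly CC[N]}) (p q : {mpoly CC[N]}) :
  (p * q) \mPo lq = (p \mPo lq) * (q \mPo lq).
Proof. exact: (rmorphM (comp_mpoly lq)). Qed.

Lemma compS (lq : N.-tuple {mpoly CC[N]}) k :
  ((-1) ^+ k : {mpoly CC[N]}) \mPo lq = (-1) ^+ k.
Proof. by rewrite (rmorphXn (comp_mpoly lq)) rmorphN1. Qed.

Lemma DD_comp (lq : N.-tuple {mpoly CC[N]}) a x0 z k :
  (DD d a x0 z k) \mPo lq = DD d (fun i j => a i j \mPo lq) (x0 \mPo lq) (fun t => z t \mPo lq) k.
Proof. exact: (DD_morph (comp_mpoly lq)). Qed.

Definition DDU k := DD d (UA d) (UX d 0) (UX d) k.

Lemma PhiU_DD k : (k < d)%N -> PhiU d k = (-1) ^+ k * DDU k.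
Proof.
elim: k => [|k IH] hk.
  by rewrite expr0 mul1r /DDU DD0.
have -> : PhiU d k.+1 = mquot N (PhiU d k - (PhiU d k \mPo subst_var d k.+1 k.+2))
  (UX d k.+2 - UX d k.+1) by reflexivity.
apply: (@mquotE N).
  have h1 : (k.+2 <= d)%N by [].
  have h2 : (k.+1 <= d)%N by apply: ltnW.
  have h3 : k.+2 != k.+1 by elim: k {IH hk h1 h2}.
  exact: (UX_neq0 h1 h2 h3).
rewrite (IH (ltnW hk)) compM compS /DDU DD_comp.
rewrite [X in _ - _ * X](@DD_eq _ d _ _ _ (zsub (UX d) k)); last first.
  by move=> t _; exact: (subst_UX t hk).
rewrite [X in _ - _ * X](@DD_exta _ d _ (UA d)); last by move=> i j; exact: subst_UA.
rewrite (subst_UX 0 hk) /zsub /= -mulrBr DD_diff exprS; ring.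
Qed.
End Concrete.


Lemma split_l m n (a : 'I_m) : split (lshift n a) = inl a.
Proof. exact: (unsplitK (inl a)). Qed.
Lemma split_r m n (b : 'I_n) : split (rshift m b) = inr b.
Proof. exact: (unsplitK (inr b)). Qed.

Section Eval.
Variable d : nat.
Local Notation N := (nA d + d.+1)%N.

Lemma DD_meval (v : 'I_N -> CC) a x0 z k :
  (DD d a x0 z k).@[v] = DD d (fun i j => (a i j).@[v]) x0.@[v] (fun t => (z t).@[v]) k.
Proof. exact: (DD_morph (meval v)). Qed.

Lemma PhiU_eval k (v : 'I_N -> CC) : (k < d)%N ->
  (PhiU d k).@[v] = (-1) ^+ k * DD d (fun i j => v (lshift _ (aidx d i j)))
     (v (rshift _ (inord 0))) (fun t => v (rshift _ (inord t))) k.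
Proof.
move=> hk; rewrite PhiU_DD // mevalM.
have -> : ((-1) ^+ k : {mpoly CC[N]}).@[v] = (-1) ^+ k.
  by rewrite (rmorphXn (meval v)) rmorphN1.
rewrite /DDU DD_meval /UX mevalXU; congr (_ * _).
rewrite (@DD_exta _ d _ (fun i j => v (lshift _ (aidx d i j)))); last by move=> i j; rewrite mevalXU.
by apply: DD_eq => t _; rewrite mevalXU.
Qed.

End Eval.

Lemma PB_morph (R S : comNzRingType) (f : {rmorphism R -> S}) d a x y :
  f (PB d a x y) = PB d (fun i j => f (a i j)) (f x) (f y).
Proof.
rewrite /PB rmorph_sum; apply: eq_bigr => i _; rewrite rmorph_sum.
by apply: eq_bigr => j _; rewrite !rmorphM !rmorphXn.
Qed.

Section Part3.
Variable d : nat.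
Local Notation N := (nA d + d.+1)%N.
Variables (c : 'I_(nA d) -> CC) (u0 : CC).
Definition ac i j := c (aidx d i j).
Definition zx (x : 'I_d -> CC) (t : nat) : CC :=
  if insub t.-1 is Some k then x k else 0.

Lemma zxE x t : (0 < t <= d)%N -> exists i : 'I_d, (nat_of_ord i = t.-1) /\ zx x t = x i.
Proof.
move=> /andP[t0 td]; have ht : (t.-1 < d)%N by lia.
by exists (Ordinal ht); rewrite /zx insubT.
Qed.

Lemma spec_eval k x : (k < d)%N ->
  (PhiU d k).@[spec_pt d c u0 x] = (-1) ^+ k * DD d ac u0 (zx x) k.
Proof.
move=> hk; rewrite PhiU_eval //; congr (_ * _).
rewrite /spec_pt split_r inordV leq0n eqxx.
rewrite (@DD_exta _ d _ ac); last by move=> i j; rewrite split_l.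
apply: DD_eq => t /andP[t0 tk]; rewrite split_r inordV.
have -> : (t <= d)%N by lia.
by rewrite /zx; case: t t0 {tk}.
Qed.

Lemma PhiSpecE y : (PhiSpec d c u0).[y] = PB d ac u0 y.
Proof.
rewrite /PhiSpec /PhiBiv /PB horner_sum; apply: eq_bigr => i _.
rewrite horner_sum; apply: eq_bigr => j _.
by rewrite !hornerE.
Qed.

Lemma part3 (u : 'I_d -> CC) :
  PhiSpec d c u0 != 0 -> injective u -> (forall k, root (PhiSpec d c u0) (u k)) ->
  forall x : 'I_d -> CC,
    (forall k : 'I_d, (PhiU d k).@[spec_pt d c u0 x] = 0) <->
    (exists s : 'S_d, forall k, x k = u (s k)).
Proof.
move=> nz uinj uroot x; split; last first.
  move=> [s hs] k; rewrite spec_eval //.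
  suff -> : DD d ac u0 (zx x) k = 0 by rewrite mulr0.
  apply: (@DD_roots _ d).
  - move=> t ht; have ht2 : (0 < t <= d)%N by have := ltn_ord k; lia.
    have [i [_ ->]] := zxE x ht2.
    by rewrite hs -PhiSpecE; apply/eqP; apply: uroot.
  - move=> t t' ht ht' e.
    have ht2 : (0 < t <= d)%N by have := ltn_ord k; lia.
    have ht3 : (0 < t' <= d)%N by have := ltn_ord k; lia.
    have [i [vi ei]] := zxE x ht2.
    have [i' [vi' ei']] := zxE x ht3.
    move: e; rewrite ei ei' !hs => /uinj /perm_inj ii'.
    by move: vi vi'; rewrite ii'; lia.
move=> H.
have HD t : (t < d)%N -> DD d ac u0 (zx x) t = 0.
  move=> td; have := H (Ordinal td); rewrite spec_eval // => /eqP.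
  by rewrite mulf_eq0 signr_eq0 => /eqP.
pose ap i j := (ac i j)%:P; pose zp t := (zx x t)%:P.
set b := DD d ac u0 (zx x) d.
have PE : PhiSpec d c u0 = b%:P * \prod_(t < d) ('X - zp t.+1).
  rewrite -[PhiSpec d c u0]/(PB d ap u0%:P 'X) (@Newton _ d ap u0%:P zp 'X d).
    rewrite DDd /b DDd rmorph_sum; congr (_ * _).
    by apply: eq_bigr => i _; rewrite rmorphM rmorphXn.
  move=> t td; rewrite /ap /zp.
  have := DD_morph (polyC : {rmorphism CC -> {poly CC}}) d ac u0 (zx x) t.
  by rewrite HD // rmorph0 => <-.
have ex i : exists t : 'I_d, u i = x t.
  have := uroot i; rewrite /root PE hornerM hornerC horner_prod mulf_eq0.
  case/orP => [/eqP b0|].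
    by move: nz; rewrite PE b0 mul0r eqxx.
  case/prodf_eq0 => t _; rewrite /zp hornerXsubC subr_eq0 /zx /= valK => /eqP ->.
  by exists t.
pose g i := odflt i [pick t | u i == x t].
have gE i : u i = x (g i).
  rewrite /g; case: pickP => [t /eqP //|none].
  by have [t e] := ex i; move: (none t); rewrite e eqxx.
have ginj : injective g by move=> i i' e; apply: uinj; rewrite !gE e.
exists ((perm ginj)^-1)%g => k.
by rewrite gE -[g _](permE ginj) permKV.
Qed.
End Part3.


Lemma PB_meval N d (w : 'I_N -> CC) a x y :
  (PB d a x y).@[w] = PB d (fun i j => (a i j).@[w]) x.@[w] y.@[w].
Proof. exact: (PB_morph (meval w)). Qed.

Lemma part1 d n (e : rel 'I_n) (i0 : 'I_n) l (j : 'I_l -> 'I_n) :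
  (1 <= l)%N -> (l <= d)%N -> injective j -> (forall k, e i0 (j k)) ->
  IdealOf (nA d + n) (UH d n e) (PhiU d l.-1 \mPo spec_tuple d n l i0 j).
Proof.
move=> l1 ld jinj adj v Uv.
set p := PhiU d l.-1 \mPo spec_tuple d n l i0 j.
apply: (Uv (fun q => q = p)) => //.
move=> w [Ww nZ] q ->.
rewrite /p comp_mpoly_meval PhiU_eval; last lia.
pose zj t := if insub t.-1 is Some k then w (rshift (nA d) (j k)) else 0.
suff -> : DD d (fun a b => (tnth (spec_tuple d n l i0 j) (lshift d.+1 (aidx d a b))).@[w])
   (tnth (spec_tuple d n l i0 j) (rshift (nA d) (inord 0))).@[w]
   (fun t => (tnth (spec_tuple d n l i0 j) (rshift (nA d) (inord t))).@[w]) l.-1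
   = DD d (fun a b => w (lshift n (aidx d a b))) (w (rshift (nA d) i0)) zj l.-1.
  apply/eqP; rewrite mulf_eq0; apply/orP; right; apply/eqP.
  apply: (@DD_roots _ d).
  - move=> t ht; have htl : (t.-1 < l)%N by lia.
    rewrite /zj insubT /=.
    have := Ww _ (ex_intro _ i0 (ex_intro _ (j (Ordinal htl)) (conj (adj _) erefl))).
    rewrite -[PhiBiv _ _ _ _ _]/(PB d _ _ _) PB_meval /Xvar !mevalXU.
    move=> <-; rewrite /PB; apply: eq_bigr => a _; apply: eq_bigr => b _.
    by rewrite mevalXU.
  - move=> t t' ht ht'; have htl : (t.-1 < l)%N by lia.
    have htl' : (t'.-1 < l)%N by lia.
    rewrite /zj !insubT /= => ew.
    have ejj : j (Ordinal htl) = j (Ordinal htl').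
      apply/eqP; apply/negPn/negP => ne; apply: nZ; split => //.
      case: (ltngtP (j (Ordinal htl)) (j (Ordinal htl'))) => h.
      + exists (j (Ordinal htl')), (j (Ordinal htl)); split => //.
        by rewrite /Xvar mevalB !mevalXU ew subrr.
      + exists (j (Ordinal htl)), (j (Ordinal htl')); split => //.
        by rewrite /Xvar mevalB !mevalXU ew subrr.
      + by move: ne; rewrite (val_inj h) eqxx.
    have := jinj _ _ ejj => /(congr1 val) /=; lia.
rewrite (@DD_exta _ d _ (fun a b => w (lshift n (aidx d a b)))); last first.
  by move=> a b; rewrite tnth_mktuple split_l mevalXU.
rewrite tnth_mktuple split_r inordV leq0n eqxx /Xvar mevalXU.
apply: DD_eq => t /andP[t0 tl]; rewrite tnth_mktuple split_r inordV.
have -> : (t <= d)%N by lia.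
have -> : (t == 0%N) = false by lia.
by rewrite /zj; case: insubP => [k _ _|_]; rewrite /Xvar ?mevalXU ?meval0.
Qed.


Lemma DD_perm (R : idomainType) d a (x0 : R) z z' k :
  perm_eq (Lz z k) (Lz z' k) -> DD d a x0 z k = DD d a x0 z' k.
Proof.
move=> pe; rewrite /DD; apply: eq_bigr => i _; apply: eq_bigr => j _.
by rewrite /Gd; case: ifP => // _; rewrite (Hs_perm pe).
Qed.

Lemma part2sym d l : (1 <= l)%N -> (l <= d)%N -> forall s : 'S_l,
  PhiU d l.-1 \mPo perm_tuple d l s = PhiU d l.-1.
Proof.
case: l => // k _ kd s.
change (PhiU d k \mPo perm_tuple d k.+1 s = PhiU d k).
rewrite (PhiU_DD kd) compM compS /DDU DD_comp.
rewrite (@DD_exta _ d _ (UA d)); last first.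
  by move=> i j; rewrite comp_mpolyXU -tnth_nth tnth_mktuple split_l.
rewrite [UX d 0 \mPo _]comp_mpolyXU -tnth_nth tnth_mktuple split_r inordV leq0n eqxx.
rewrite (@DD_perm _ d (UA d) _ _ (UX d)) //.
rewrite !LzM /UX.
have -> : iota 0 k.+1 = map val (enum 'I_k.+1) by rewrite val_enum_ord.
rewrite -!map_rev -!map_comp.
set G := (((fun t : nat => 'X_(rshift (nA d) (inord t.+1))) \o val) \o id) : 'I_k.+1 -> {mpoly CC[(nA d + d.+1)]}.
have E : forall i : 'I_k.+1, ((((fun t : nat =>
            'X_(rshift (nA d) (inord t.+1)) \mPo perm_tuple d k.+1 s) \o val) \o id) i : {mpoly CC[(nA d + d.+1)]}) = G (s i).
  move=> i; rewrite /G /= comp_mpolyXU -tnth_nth tnth_mktuple split_r inordV.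
  have -> : (i.+1 <= d)%N by have := ltn_ord i; lia.
  by rewrite /= valK.
rewrite (eq_map E) map_comp.
apply: perm_map; rewrite -!enumT.
apply: uniq_perm.
- by rewrite map_inj_uniq ?rev_uniq ?enum_uniq //; exact: perm_inj.
- by rewrite rev_uniq enum_uniq.
move=> i; rewrite !mem_rev mem_enum; apply/mapP; exists ((s^-1)%g i).
  by rewrite mem_rev mem_enum.
by rewrite permKV.
Qed.


Section Deg.
Variable d : nat.
Local Notation N := (nA d + d.+1)%N.

Definition xw (m : 'X_{1..N}) := (\sum_(t < d.+1) m (rshift (nA d) t))%N.
Definition xle (D : nat) (p : {mpoly CC[N]}) := forall m, m \in msupp p -> (xw m <= D)%N.

Lemma xwD m1 m2 : xw (m1 + m2)%MM = (xw m1 + xw m2)%N.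
Proof. by rewrite /xw -big_split; apply: eq_bigr => t _; rewrite mnmDE. Qed.

Lemma xle_le D D' p : (D <= D')%N -> xle D p -> xle D' p.
Proof. by move=> h H m /H /leq_trans; apply. Qed.

Lemma xle0 D : xle D 0.
Proof. by move=> m; rewrite msupp0. Qed.

Lemma xle1 D : xle D 1.
Proof.
move=> m; rewrite msupp1 inE => /eqP ->.
by rewrite /xw big1 // => t _; rewrite mnm0E.
Qed.

Lemma xleD D p q : xle D p -> xle D q -> xle D (p + q).
Proof. by move=> Hp Hq m /msuppD_le; rewrite mem_cat => /orP[/Hp|/Hq]. Qed.

Lemma xleN D p : xle D p -> xle D (- p).
Proof. by move=> Hp m; rewrite (perm_mem (msuppN p)); apply: Hp. Qed.

Lemma xleM D1 D2 p q : xle D1 p -> xle D2 q -> xle (D1 + D2) (p * q).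
Proof.
move=> Hp Hq m /msuppM_le /allpairsP [[m1 m2] /= [h1 h2 ->]].
by rewrite xwD leq_add ?Hp ?Hq.
Qed.

Lemma xle_sum (I : Type) (r : seq I) (F : I -> {mpoly CC[N]}) D :
  (forall i, xle D (F i)) -> xle D (\sum_(i <- r) F i).
Proof.
move=> H; elim: r => [|i r IH]; first by rewrite big_nil; apply: xle0.
by rewrite big_cons; apply: xleD.
Qed.

Lemma xleX D p n : xle D p -> xle (D * n) (p ^+ n).
Proof.
move=> H; elim: n => [|n IH]; first by rewrite expr0; apply: xle1.
by rewrite exprS mulnS; apply: xleM.
Qed.

Lemma xleUA i j : xle 0 (UA d i j).
Proof.
move=> m; rewrite /UA msuppX inE => /eqP ->.
by rewrite /xw big1 // => t _; rewrite mnm1E lrshift_neq.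
Qed.

Lemma xleUX t : xle 1 (UX d t).
Proof.
move=> m; rewrite /UX msuppX inE => /eqP ->.
rewrite /xw (bigD1 (inord t)) //= mnm1E eqxx big1 // => t' ne.
by rewrite mnm1E rshift_eq eq_sym (negbTE ne).
Qed.

Lemma xle_Qf (z : {mpoly CC[N]}) p m : xle 1 z -> (forall m', xle m' (p m')) -> xle m (Qf z p m).
Proof.
move=> Hz Hp; elim: m => [|m IH] /=; first exact: Hp.
by apply: xleD; [apply: Hp | apply: (xleM Hz IH)].
Qed.

Lemma xle_Hs s m : (forall z, z \in s -> xle 1 z) -> xle m (Hs s m).
Proof.
elim: s m => [|z s IH] m H /=.
  by case: (m == 0%N); [apply: xle_le (xle1 0) | apply: xle0].
apply: xle_Qf; first by apply: H; rewrite mem_head.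
by move=> m'; apply: IH => z' zs; apply: H; rewrite inE zs orbT.
Qed.

Lemma xle_Lz k z' : z' \in Lz (UX d) k -> xle 1 z'.
Proof.
elim: k => [|k IH] /=; first by rewrite inE => /eqP ->; apply: xleUX.
by rewrite inE => /orP[/eqP ->|/IH //]; apply: xleUX.
Qed.

Lemma xle_DDU k : (k < d)%N -> xle (2 * d - k) (DDU d k).
Proof.
move=> kd; apply: xle_sum => i; apply: xle_sum => j.
have h : (i + (j - k) <= 2 * d - k)%N by have := ltn_ord i; have := ltn_ord j; lia.
apply: (@xle_le ((0 + 1 * i) + (j - k))%N); first by rewrite add0n mul1n.
apply: xleM; first by apply: xleM; [exact: xleUA | apply: xleX; apply: xleUX].
rewrite /Gd; case: ifP => hk; last by apply: xle0.
by apply: xle_Hs => z; apply: xle_Lz.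
Qed.
End Deg.


Lemma size_prod_exp (I : Type) (r : seq I) (F : I -> {poly CC}) (e : I -> nat) :
  (size (\prod_(i <- r) F i ^+ e i)%R <= (\sum_(i <- r) (size (F i)).-1 * e i).+1)%N.
Proof.
elim: r => [|i r IH]; first by rewrite !big_nil size_poly1.
rewrite !big_cons; apply: leq_trans (size_polyMleq _ _) _.
have := size_poly_exp_leq (F i) (e i); lia.
Qed.

Definition tri (M : nat) := (M * M.+1 %/ 2)%N.

Lemma triS M : tri M.+1 = (tri M + M.+1)%N.
Proof.
rewrite /tri.
have -> : (M.+1 * M.+2 = M.+1 * 2 + M * M.+1)%N by ring.
by rewrite divnDl ?dvdn_mull // mulnK // addnC.
Qed.

Lemma tri_lt M M' : (M < M')%N -> (tri M + M < tri M')%N.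
Proof.
elim: M' => // M' IH; rewrite ltnS leq_eqVlt => /orP[/eqP ->|h].
  by rewrite triS; lia.
by have := IH h; rewrite triS; lia.
Qed.

Lemma aidx_val d i j : (i <= d)%N -> (j <= d)%N ->
  nat_of_ord (aidx d i j) = (tri (maxn i j) + minn i j)%N.
Proof.
move=> hi hj; rewrite /aidx val_insubd -/(tri (maxn i j)).
have hM : (maxn i j <= d)%N by rewrite geq_max hi hj.
have : (tri (maxn i j) + minn i j < nA d)%N.
  rewrite /nA -/(tri d.+1).
  have hmin : (minn i j <= maxn i j)%N by lia.
  suff : (tri (maxn i j) + maxn i j < tri d.+1)%N by lia.
  by apply: tri_lt; rewrite ltnS.
by move=> ->.
Qed.

Lemma aidx_dd d i j : (i <= d)%N -> (j <= d)%N ->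
  (aidx d i j == aidx d d d) = (i == d) && (j == d).
Proof.
move=> hi hj; apply/eqP/andP => [/(congr1 val)|[/eqP -> /eqP ->] //].
rewrite /= !aidx_val // maxnn minnn.
have hM : (maxn i j <= d)%N by rewrite geq_max hi hj.
move: hM; rewrite leq_eqVlt => /orP[/eqP hM|hl].
  rewrite hM => e; have : minn i j = d by lia.
  move: hM; rewrite /maxn /minn; case: ifP => _ ? ?; split; apply/eqP; lia.
have := tri_lt hl; lia.
Qed.

Lemma ne_max n (i : 'I_n.+1) : i != ord_max -> (nat_of_ord i == n) = false.
Proof. by move=> ne; apply/negbTE; apply: contra ne => /eqP e; apply/eqP; apply: val_inj. Qed.

Section Deg2.
Variable d : nat.
Local Notation N := (nA d + d.+1)%N.

Definition hh (v : 'I_N) : {poly CC} :=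
  match split v with
  | inl a => ((a == aidx d d d)%:R)%:P
  | inr t => if (t <= 1)%N then 'X else 0
  end.

Definition psi (p : {mpoly CC[N]}) : {poly CC} := mmap (@polyC CC) hh p.

Lemma psi_coef p D : (psi p)`_D = \sum_(m <- msupp p) p@_m * (mmap1 hh m)`_D.
Proof. by rewrite /psi /mmap coef_sum; apply: eq_bigr => m _; rewrite coefCM. Qed.

Lemma size_mmap1 m : (size (mmap1 hh m) <= (xw m).+1)%N.
Proof.
apply: leq_trans (size_prod_exp _ _ _) _; rewrite ltnS.
rewrite -[X in (X <= _)%N]/(\sum_(i < N) (size (hh i)).-1 * m i)%N.
rewrite big_split_ord /= big1 ?add0n; last first.
  move=> i _; rewrite /hh split_l.
  have := @size_polyC_leq1 CC ((i == aidx d d d)%:R).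
  set sz := size _ => hs.
  by have -> : sz.-1 = 0%N by lia.
apply: leq_sum => t _; rewrite /hh split_r.
by case: ifP => _; rewrite ?size_polyX ?size_poly0 /= ?mul1n ?mul0n.
Qed.

Lemma coef_mmap1 m D : (xw m < D)%N -> (mmap1 hh m)`_D = 0.
Proof. by move=> h; rewrite nth_default //; apply: leq_trans (size_mmap1 m) h. Qed.

Lemma psiM p q : psi (p * q) = psi p * psi q.
Proof. exact: (rmorphM (mmap (@polyC CC) hh)). Qed.
Lemma psiS k : psi ((-1) ^+ k) = (-1) ^+ k.
Proof. by rewrite /psi (rmorphXn (mmap (@polyC CC) hh)) rmorphN1. Qed.
Lemma psi_DD a x0 z k :
  psi (DD d a x0 z k) = DD d (fun i j => psi (a i j)) (psi x0) (fun t => psi (z t)) k.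
Proof. exact: (DD_morph (mmap (@polyC CC) hh)). Qed.
Lemma psiX i : psi 'X_i = hh i.
Proof. by rewrite /psi mmapX mmap1U. Qed.

Definition zpsi (t : nat) : {poly CC} := if t == 1%N then 'X else 0.

Lemma Qf0 (p : nat -> {poly CC}) m : Qf 0 p m = p m.
Proof. by elim: m => [|m IH] //=; rewrite mul0r addr0. Qed.

Lemma Hs_zpsi k m : Hs (Lz zpsi k) m = 'X ^+ m.
Proof.
elim: k m => [|k IH] m; first by rewrite /= -[Qf _ _ m]/(Hs [:: 'X] m) Hs1.
rewrite -[Lz zpsi k.+1]/(zpsi k.+2 :: Lz zpsi k) /zpsi /=.
by rewrite Qf0.
Qed.

Lemma psi_PhiU k : (k < d)%N -> psi (PhiU d k) = (-1) ^+ k * 'X ^+ (2 * d - k).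
Proof.
move=> kd; rewrite PhiU_DD // psiM psiS /DDU psi_DD; congr (_ * _).
rewrite (@DD_eq _ d _ _ _ zpsi); last first.
  move=> t ht; rewrite /UX psiX /hh split_r inordV /zpsi.
  have -> : (t <= d)%N by lia.
  by case: (t =P 1%N) => [->|ne] //; have -> : (t <= 1)%N = false by lia.
rewrite /UX psiX /hh split_r inordV leq0n /=.
rewrite /DD (bigD1 ord_max) //=.
rewrite [X in _ + X = _]big1; last first.
  move=> i ne; apply: big1 => j _.
  by rewrite /UA psiX /hh split_l aidx_dd ?leq_ord // ne_max // mulr0n !mul0r.
rewrite addr0 (bigD1 ord_max) //=.
rewrite [X in _ + X = _]big1; last first.
  move=> j ne.
  by rewrite /UA psiX /hh split_l aidx_dd ?leq_ord // eqxx ne_max // mulr0n !mul0r.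
rewrite addr0.
rewrite /UA psiX /hh split_l eqxx mul1r /Gd ltnW // Hs_zpsi -exprD.
by congr (_ ^+ _); lia.
Qed.

Lemma part2deg l : (1 <= l)%N -> (l <= d)%N -> xdeg d (PhiU d l.-1) = (2 * d - l + 1)%N.
Proof.
move=> l1 ld; have kd : (l.-1 < d)%N by lia.
have -> : (2 * d - l + 1 = 2 * d - l.-1)%N by lia.
have up : xle (2 * d - l.-1)%N (PhiU d l.-1).
  rewrite PhiU_DD // -[(2 * d - l.-1)%N]add0n; apply: xleM; last exact: xle_DDU.
  rewrite -[0%N](mul0n l.-1); apply: xleX; apply: xleN; apply: xle1.
apply/eqP; rewrite eqn_leq; apply/andP; split.
  by apply/bigmax_leqP_seq => m hm _; apply: up.
rewrite leqNgt; apply/negP => lt.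
have : (psi (PhiU d l.-1))`_(2 * d - l.-1) = 0.
  rewrite psi_coef big_seq big1 // => m hm; rewrite coef_mmap1 ?mulr0 //.
  apply: leq_ltn_trans lt; rewrite /xdeg.
  by rewrite /xw; apply: (@leq_bigmax_seq _ _ xpredT _ m hm).
have e : ((-1) ^+ l.-1 : {poly CC}) = ((-1) ^+ l.-1 : CC)%:P.
  by rewrite rmorphXn rmorphN1.
rewrite psi_PhiU // e coefCM coefXn eqxx mulr1 => /eqP.
by rewrite signr_eq0.
Qed.
End Deg2.

Unset Implicit Arguments.

Theorem mainTheorem10 (d : nat) :
  (* (i) *)
  (forall (n : nat) (e : rel 'I_n),
     (forall u v : 'I_n, e u v = e v u) -> irreflexive e ->
     (forall u v : 'I_n, connect e u v) ->
     (forall u : 'I_n, #|[set v | e u v]| = d) ->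
     forall (i0 : 'I_n) (l : nat) (j : 'I_l -> 'I_n),
       (1 <= l)%N -> (l <= d)%N -> injective j -> (forall k, e i0 (j k)) ->
       IdealOf (nA d + n) (UH d n e) (PhiU d l.-1 \mPo spec_tuple d n l i0 j))
  /\
  (* (ii) *)
  (forall l : nat, (1 <= l)%N -> (l <= d)%N ->
     (forall s : 'S_l, PhiU d l.-1 \mPo perm_tuple d l s = PhiU d l.-1) /\
     xdeg d (PhiU d l.-1) = (2 * d - l + 1)%N)
  /\
  (* (iii) *)
  (forall (c : 'I_(nA d) -> CC) (u0 : CC) (u : 'I_d -> CC),
     PhiSpec d c u0 != 0 -> injective u -> (forall k, root (PhiSpec d c u0) (u k)) ->
     forall x : 'I_d -> CC,
       (forall k : 'I_d, (PhiU d k).@[spec_pt d c u0 x] = 0) <->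
       (exists s : 'S_d, forall k, x k = u (s k))).
Proof.
split.
  move=> n e _ _ _ _ i0 l j l1 ld jinj adj; exact: part1.
split.
  by move=> l l1 ld; split; [exact: part2sym | exact: part2deg].
move=> c u0 u nz uinj ur x; exact: part3.
Qed.
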